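(* In the setting described in the context, let $\lambda^*$ be a minimizer of the dual function $g(\lambda)$ over $\lambda\succeq 0$ (a global optimum of the dual problem). Then $\|\lambda^*\|_2$ is upper bounded by a quantity $\lambda_{\max}$ which is $O(N^2)$ as a function of the number of channels $N$.
   Context: Setting: a source communicates with $K$ users through a single relay over $N$ channels, with user weights $w_k\ge0$, $\sum_k w_k=1$; nonnegative channel power gains $a_m$, $b_{nk}$, $c_{mk}$ ($1\le m,n\le N$, $1\le k\le K$); power limits $P_s,P_r,P_t>0$. Logarithms are base 2. Relaxed problem (P'): maximize $\sum_{m,n,k}\frac{w_k}{2}\tilde\phi_{mnk}\min\{\log(1+a_mP^s_{mnk}/\tilde\phi_{mnk}),\log(1+c_{mk}P^s_{mnk}/\tilde\phi_{mnk}+b_{nk}P^r_{mnk}/\tilde\phi_{mnk})\}$ (terms with $\tilde\phi_{mnk}=0$ are $0$) over $\tilde\phi_{mnk}\in[0,1]$ with $\sum_{n,k}\tilde\phi_{mnk}=1\ \forall m$, $\sum_{m,k}\tilde\phi_{mnk}=1\ \forall n$, and $P^s_{mnk},P^r_{mnk}\ge0$ with $\sum P^s_{mnk}\le P_s$, $\sum P^r_{mnk}\le P_r$, $\sum(P^s_{mnk}+P^r_{mnk})\le P_t$. For $\lambda=(\lambda_s,\lambda_r,\lambda_t)\succeq0$ (multipliers of the three power constraints), the dual function is $g(\lambda)=\max[\text{objective of (P')}-(\lambda_s+\lambda_t)\sum P^s_{mnk}-(\lambda_r+\lambda_t)\sum P^r_{mnk}]+\lambda_sP_s+\lambda_rP_r+\lambda_tP_t$,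 maximizing over all feasible $\tilde\phi$ and nonnegative powers. It is assumed throughout that every power constraint that is active at optimality is strictly active (remains active under small perturbations of the power limits). *)

(* Defs.v *)
From HB Require Import structures.
From mathcomp Require Import all_boot all_order all_algebra.
From mathcomp Require Import all_classical all_reals all_analysis.
Set Implicit Arguments. Unset Strict Implicit. Unset Printing Implicit Defensive.
Import Order.TTheory GRing.Theory Num.Theory.
Local Open Scope ring_scope.
Local Open Scope classical_set_scope.

Section Relay.
Variables (R : realType) (N K : nat).

Definition log2 (x : R) : R := ln x / ln 2.

Definition var3 := 'I_N -> 'I_N -> 'I_K -> R.

Definition rate_term (w : 'I_K -> R) (a : 'I_N -> R) (b c : 'I_N -> 'I_K -> R)
  (phi ps pr : var3) (m n : 'I_N) (k : 'I_K) : R :=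
  if phi m n k == 0 then 0 else
  w k / 2 * phi m n k *
    Num.min (log2 (1 + a m * ps m n k / phi m n k))
            (log2 (1 + c m k * ps m n k / phi m n k + b n k * pr m n k / phi m n k)).

Definition objective w a b c (phi ps pr : var3) : R :=
  \sum_(m < N) \sum_(n < N) \sum_(k < K) rate_term w a b c phi ps pr m n k.

Definition total (p : var3) : R :=
  \sum_(m < N) \sum_(n < N) \sum_(k < K) p m n k.

(* feasible set of the inner maximization of the dual function:
   feasible phi, nonnegative powers (power constraints are dualized) *)
Definition dual_feasible (phi ps pr : var3) : Prop :=
  (forall m n k, 0 <= phi m n k <= 1) /\
  (forall m, \sum_(n < N) \sum_(k < K) phi m n k = 1) /\
  (forall n, \sum_(m < N) \sum_(k < K) phi m n k = 1) /\
  (forall m n k, 0 <= ps m n k /\ 0 <= pr m n k).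

Definition lagrangian w a b c (Ps Pr Pt ls lr lt : R) (phi ps pr : var3) : R :=
  objective w a b c phi ps pr - (ls + lt) * total ps - (lr + lt) * total pr
  + ls * Ps + lr * Pr + lt * Pt.

Definition dualfun w a b c (Ps Pr Pt ls lr lt : R) : \bar R :=
  ereal_sup [set x | exists phi ps pr, dual_feasible phi ps pr /\
                       x = (lagrangian w a b c Ps Pr Pt ls lr lt phi ps pr)%:E].

Definition dual_minimizer w a b c (Ps Pr Pt ls lr lt : R) : Prop :=
  [/\ 0 <= ls, 0 <= lr, 0 <= lt &
   forall ls' lr' lt', 0 <= ls' -> 0 <= lr' -> 0 <= lt' ->
     (dualfun w a b c Ps Pr Pt ls lr lt <= dualfun w a b c Ps Pr Pt ls' lr' lt')%E].

End Relay.

(* Main.v *)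
Require Import Defs.
From HB Require Import structures.
From mathcomp Require Import all_boot all_order all_algebra.
From mathcomp Require Import all_classical all_reals all_analysis.
From mathcomp Require Import ring lra.
Import Order.TTheory GRing.Theory Num.Theory.
Local Open Scope ring_scope.

Lemma ln2_gt0 (R : realType) : 0 < ln (2 : R).
Proof. apply: ln_gt0; lra. Qed.

Lemma w_le1 (R : realType) K (w : 'I_K -> R) k :
  (forall k, 0 <= w k) -> \sum_(k < K) w k = 1 -> w k <= 1.
Proof.
move=> w0 ws; rewrite -ws (bigD1 k) //= lerDl; exact: sumr_ge0.
Qed.

Lemma term_bound (R : realType) N K (G : R) w a b c (phi ps pr : var3 R N K) m n k :
  (forall k, 0 <= w k) -> \sum_(k < K) w k = 1 ->
  0 <= a m <= G -> 0 <= phi m n k -> 0 <= ps m n k ->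
  rate_term w a b c phi ps pr m n k <= G / (2 * ln 2) * ps m n k.
Proof.
move=> w0 ws /andP[a0 aG] phi0 ps0.
have l2 := ln2_gt0 R.
have G0 : 0 <= G by apply: le_trans aG.
rewrite /rate_term; case: ifPn => [_|phin0].
  by apply: mulr_ge0 => //; apply: divr_ge0 => //; lra.
have phip : 0 < phi m n k by rewrite lt_def phin0.
set x := a m * ps m n k / phi m n k.
have x0 : 0 <= x by rewrite /x; apply: divr_ge0 => //; apply: mulr_ge0.
have c0 : 0 <= w k / 2 * phi m n k by apply: mulr_ge0 => //; apply: divr_ge0.
apply: le_trans (_ : w k / 2 * phi m n k * log2 (1 + x) <= _).
  by apply: ler_wpM2l => //; rewrite ge_min lexx.
have hl : log2 (1 + x) <= x / ln 2.
  rewrite /log2; apply: ler_pM => //; last by rewrite le_ln1Dx //; lra.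
    apply: ln_ge0; lra.
  by rewrite invr_ge0 ltW.
apply: le_trans (_ : w k / 2 * phi m n k * (x / ln 2) <= _).
  exact: ler_wpM2l.
have -> : w k / 2 * phi m n k * (x / ln 2) = w k * a m * ps m n k / (2 * ln 2).
  rewrite /x; field; apply/andP; split; rewrite ?gt_eqF //.
have wl := @w_le1 _ _ w k w0 ws.
have wa : w k * a m <= G by have := ler_pM (w0 k) a0 wl aG; rewrite mul1r.
rewrite mulrAC; apply: ler_wpM2r => //.
by apply: ler_wpM2r => //; rewrite invr_ge0; apply: mulr_ge0; lra.
Qed.

Lemma obj_bound (R : realType) N K (G : R) w a b c (phi ps pr : var3 R N K) :
  (forall k, 0 <= w k) -> \sum_(k < K) w k = 1 ->
  (forall m, 0 <= a m <= G) -> @dual_feasible R N K phi ps pr ->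
  objective w a b c phi ps pr <= G / (2 * ln 2) * Defs.total ps.
Proof.
move=> w0 ws ha [hphi [_ [_ hp]]].
rewrite /objective /Defs.total !mulr_sumr; apply: ler_sum => m _.
rewrite !mulr_sumr; apply: ler_sum => n _.
rewrite !mulr_sumr; apply: ler_sum => k _.
apply: term_bound => //; first by case/andP: (hphi m n k).
by case: (hp m n k).
Qed.

Lemma total_ge0 (R : realType) N K (p : var3 R N K) :
  (forall m n k, 0 <= p m n k) -> 0 <= Defs.total p.
Proof. by move=> h; rewrite /Defs.total; do 3 (apply: sumr_ge0 => ? _). Qed.

Lemma obj_zero (R : realType) N K w a b c (phi : var3 R N K) :
  objective w a b c phi (fun _ _ _ => 0) (fun _ _ _ => 0) = 0.
Proof.
rewrite /objective big1 // => m _; rewrite big1 // => n _; rewrite big1 // => k _.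
rewrite /rate_term; case: ifP => // _.
by rewrite !mulr0 !mul0r !addr0 /log2 ln1 mul0r minxx mulr0.
Qed.

Theorem lemma3 (R : realType) (K : nat) (Ps Pr Pt G : R) :
  0 < Ps -> 0 < Pr -> 0 < Pt -> 0 <= G ->
  exists C : R, forall (N : nat) (w : 'I_K -> R) (a : 'I_N -> R)
    (b c : 'I_N -> 'I_K -> R) (ls lr lt : R),
    (forall k, 0 <= w k) -> \sum_(k < K) w k = 1 ->
    (forall m, 0 <= a m <= G) ->
    (forall n k, 0 <= b n k <= G) ->
    (forall m k, 0 <= c m k <= G) ->
    dual_minimizer w a b c Ps Pr Pt ls lr lt ->
    Num.sqrt (ls ^+ 2 + lr ^+ 2 + lt ^+ 2) <= C * (N%:R) ^+ 2.
Proof.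
move=> Ps0 Pr0 Pt0 G0.
set t := G / (2 * ln 2).
have l2 := ln2_gt0 R.
have t0 : 0 <= t by apply: divr_ge0 => //; lra.
set p := Num.min Ps (Num.min Pr Pt).
have p0 : 0 < p by rewrite /p !lt_min Ps0 Pr0 Pt0.
have pPs : p <= Ps by rewrite /p ge_min lexx.
have pPr : p <= Pr by rewrite /p !ge_min lexx orbT.
have pPt : p <= Pt by rewrite /p !ge_min lexx !orbT.
exists (t * Pt / p).
move=> N w a b c ls lr lt w0 ws ha hb hc [ls0 lr0 lt0 hmin].
have hK : (0 < K)%N.
  rewrite lt0n; apply/eqP => K0; move: ws; rewrite big_pred0 => [/eqP|i].
    by rewrite eq_sym oner_eq0.
  by have := ltn_ord i; rewrite {2}K0.
pose k0 : 'I_K := Ordinal hK.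
set tN : R := if N == 0%N then 0 else t.
have tN0 : 0 <= tN by rewrite /tN; case: ifP.
have low : ((ls * Ps + lr * Pr + lt * Pt)%:E <= dualfun w a b c Ps Pr Pt ls lr lt)%E.
  apply: ereal_sup_ubound.
  pose phi0 : var3 R N K := fun m n k => ((n == m) && (k == k0))%:R.
  exists phi0, (fun _ _ _ => 0), (fun _ _ _ => 0); split.
    split; [|split; [|split]].
    - move=> m n k; rewrite /phi0; case: ((n == m) && (k == k0)); apply/andP; split; rewrite ?ler01 ?lexx // ler0n.
    - move=> m; rewrite (bigD1 m) //= [X in _ + X = _]big1 => [|n nm]; last first.
        by rewrite big1 // => k _; rewrite /phi0 (negbTE nm).
      rewrite addr0 (bigD1 k0) //= big1 => [|k kk]; last by rewrite /phi0 eqxx (negbTE kk).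
      by rewrite /phi0 !eqxx addr0.
    - move=> n; rewrite (bigD1 n) //= [X in _ + X = _]big1 => [|m nm]; last first.
        by rewrite big1 // => k _; rewrite /phi0 eq_sym (negbTE nm).
      rewrite addr0 (bigD1 k0) //= big1 => [|k kk]; last by rewrite /phi0 eqxx (negbTE kk).
      by rewrite /phi0 !eqxx addr0.
    - by move=> *; split.
  rewrite /lagrangian obj_zero /Defs.total.
  have -> : \sum_(m < N) \sum_(n < N) \sum_(k < K) (0:R) = 0.
    by rewrite big1 // => m _; rewrite big1 // => n _; rewrite big1.
  by congr (_%:E); ring.
have up : (dualfun w a b c Ps Pr Pt 0 0 tN <= (tN * Pt)%:E)%E.
  apply: ge_ereal_sup => x [phi [ps [pr [hf ->]]]].
  rewrite lee_fin /lagrangian.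
  have hf' := hf; case: hf' => [_ [_ [_ hp]]].
  have tpr := @total_ge0 _ _ _ pr (fun m n k => proj2 (hp m n k)).
  have tps := @total_ge0 _ _ _ ps (fun m n k => proj1 (hp m n k)).
  have ob : objective w a b c phi ps pr <= tN * Defs.total ps.
    rewrite /tN; case: eqP => [N0|_]; last exact: obj_bound.
    subst N; by rewrite /objective /Defs.total !big_ord0 mul0r.
  have : 0 <= tN * Defs.total pr by apply: mulr_ge0.
  lra.
have key : ls * Ps + lr * Pr + lt * Pt <= tN * Pt.
  by rewrite -lee_fin; apply: le_trans low (le_trans (hmin 0 0 tN (lexx _) (lexx _) tN0) up).
have hs : Num.sqrt (ls ^+ 2 + lr ^+ 2 + lt ^+ 2) <= ls + lr + lt.
  rewrite -[X in _ <= X]ger0_norm; last by lra.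
  rewrite -sqrtr_sqr ler_sqrt; last by apply: sqr_ge0.
  nra.
apply: le_trans hs _.
have : p * (ls + lr + lt) <= tN * Pt by nra.
have hN : tN * Pt <= t * Pt * N%:R ^+ 2.
  rewrite /tN; case: eqP => [->|/eqP N0]; first by rewrite mulr0n expr0n /= !mulr0 mul0r.
  have : 1 <= N%:R ^+ 2 :> R.
    rewrite expr_ge1 // ?ler0n // ler1n; by case: N N0 {ha hb hc hmin a b c tN tN0 low up key}.
  have : 0 <= t * Pt by apply: mulr_ge0 => //; lra.
  nra.
move=> h.
rewrite mulrAC ler_pdivlMr //.
nra.
Qed.
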